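(* For $w\in\Sigma^*$ the following are equivalent: (i) $w$ contains no letter square; (ii) every scattered factor $u$ of $w$ with $|C(w,u)|=1$ has exactly one embedding in $w$.
   Context: A letter square of $w$ is a factor $\mathtt{a}\mathtt{a}$ of $w$ for some letter $\mathtt{a}\in\Sigma$. An embedding of $u$ in $w$ is a map $e:\{1,\dots,|u|\}\to\{1,\dots,|w|\}$ with $e(1)<\dots<e(|u|)$ and $u[i]=w[e(i)]$. The shuffle $\mathrm{Sh}(u,v)$ is the set of words of length $|u|+|v|$ admitting an embedding of $u$ and one of $v$ with disjoint images covering all positions, and $C(w,u)=\{v\in\Sigma^{|w|-|u|}: w\in\mathrm{Sh}(u,v)\}$. *)

(* Defs.v *)
From mathcomp Require Import all_boot.
Set Implicit Arguments. Unset Strict Implicit. Unset Printing Implicit Defensive.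

Definition has_letter_square (Sigma : finType) (w : seq Sigma) : Prop :=
  exists a : Sigma, infix [:: a; a] w.

(* e : {1..|u|} -> {1..|w|} (0-indexed here) is an embedding of u in w. *)
Definition is_embedding (Sigma : finType) (u w : seq Sigma)
    (e : 'I_(size u) -> 'I_(size w)) : Prop :=
  (forall i j : 'I_(size u), i < j -> e i < e j) /\
  (forall i : 'I_(size u), tnth (in_tuple u) i = tnth (in_tuple w) (e i)).

Definition in_shuffle (Sigma : finType) (u v w : seq Sigma) : Prop :=
  size w = size u + size v /\
  exists (e1 : 'I_(size u) -> 'I_(size w)) (e2 : 'I_(size v) -> 'I_(size w)),
    is_embedding e1 /\ is_embedding e2 /\
    (forall k : 'I_(size w), (exists i, e1 i = k) <-> ~ (exists j, e2 j = k)).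

Definition in_C (Sigma : finType) (w u v : seq Sigma) : Prop :=
  size v = size w - size u /\ in_shuffle u v w.

Definition C_card_one (Sigma : finType) (w u : seq Sigma) : Prop :=
  exists v, in_C w u v /\ forall v', in_C w u v' -> v' = v.

Definition unique_embedding (Sigma : finType) (u w : seq Sigma) : Prop :=
  (exists e : 'I_(size u) -> 'I_(size w), is_embedding e) /\
  (forall e1 e2 : 'I_(size u) -> 'I_(size w),
      is_embedding e1 -> is_embedding e2 -> e1 =1 e2).

(* Main.v *)
Require Import Defs.
From mathcomp Require Import all_boot zify.
Set Implicit Arguments. Unset Strict Implicit. Unset Printing Implicit Defensive.

Section Core.
Variable Sigma : finType.
Implicit Types (w z : seq Sigma) (a b : Sigma).

Lemma sq_cons a w : ~ has_letter_square (a :: w) -> ~ has_letter_square w.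
Proof. move=> H [b Hb]; apply: H; exists b; by rewrite infix_consl Hb orbT. Qed.

Lemma sq_head a s : has_letter_square (a :: a :: s).
Proof. exists a; apply/infixP; by exists [::], s. Qed.

Lemma split_first (r : bitseq) w b s : size r = size w -> mask r w = b :: s ->
  exists j r'' z w3, [/\ r = nseq j false ++ true :: r'', w = z ++ b :: w3,
     size z = j & mask r'' w3 = s].
Proof.
elim: w r => [|x w IH] [|y r] //= [Hs].
case: y => /=.
  case=> -> <-. by exists 0, r, [::], w.
move=> /(IH _ Hs) [j [r'' [z [w3 [-> -> <- <-]]]]].
by exists (size z).+1, r'', (x :: z), w3.
Qed.

Lemma diff_case a w r r' : ~ has_letter_square (a :: w) ->
  size r = size w -> size r' = size w -> a :: mask r w = mask r' w ->
  exists m1 m2, [/\ size m1 = size (a :: w), size m2 = size (a :: w),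
    mask m1 (a :: w) = mask (true :: r) (a :: w),
    mask m2 (a :: w) = mask (true :: r) (a :: w) &
    mask (map negb m1) (a :: w) != mask (map negb m2) (a :: w)].
Proof.
move=> Hsq Hr Hr' H.
have [j [r'' [z [w3 [Er' Ew Hz Hm]]]]] := split_first Hr' (esym H).
subst r' w.
have Hs3 : size r'' = size w3.
  by move: Hr'; rewrite !size_cat /= size_nseq Hz => /eqP; rewrite eqn_add2l => /eqP [].
exists (true :: nseq j false ++ false :: r''), (false :: nseq j false ++ true :: r'').
split.
- by rewrite /= !size_cat /= size_nseq Hz Hs3.
- by rewrite /= !size_cat /= size_nseq Hz Hs3.
- by rewrite /= mask_cat ?size_nseq // mask_false /= Hm.
- by rewrite /= -H.
rewrite /= !map_cat /= !map_nseq /= !mask_cat ?size_nseq ?Hz // !mask_true ?size_nseq ?Hz //=.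
apply/eqP => E.
case: z Hz E Hsq {Hr Hr' H Hm} => [|c z] Hz /=.
  move=> _ H'; apply: H'; exact: sq_head.
case=> -> _ H'; apply: H'; exact: sq_head.
Qed.

Lemma core w : ~ has_letter_square w -> forall m m', size m = size w -> size m' = size w ->
  mask m w = mask m' w -> m != m' ->
  exists m1 m2, [/\ size m1 = size w, size m2 = size w, mask m1 w = mask m w,
    mask m2 w = mask m w & mask (map negb m1) w != mask (map negb m2) w].
Proof.
elim: w => [|a w IH] Hsq m m' Hm Hm'.
  by case: m Hm => // _; case: m' Hm'.
case: m Hm => [|x r] // [Hr]; case: m' Hm' => [|x' r'] // [Hr'].
have [<-|Hxx] := eqVneq x x'.
  move=> Hm Hne.
  have Hm2 : mask r w = mask r' w by case: x Hm Hne => /= // -[].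
  have Hne' : r != r' by apply: contra Hne => /eqP ->.
  have [m1 [m2 [H1 H2 H3 H4 H5]]] := IH (sq_cons Hsq) _ _ Hr Hr' Hm2 Hne'.
  exists (x :: m1), (x :: m2); split => /=; try by rewrite ?H1 ?H2 ?H3 ?H4.
  case: x {Hm Hne} => /=; first exact: H5.
  by apply: contra H5 => /eqP [->].
move=> Hm _.
case: x x' Hxx Hm => [] [] //= _ Hm.
  exact: diff_case Hsq Hr Hr' Hm.
have [m1 [m2 [H1 H2 H3 H4 H5]]] := diff_case Hsq Hr' Hr (esym Hm).
exists m1, m2; split => //; by rewrite ?H3 ?H4.
Qed.
End Core.

Lemma maskL (T : Type) (x0 : T) (w : seq T) (L : seq nat) :
  sorted ltn L -> all (fun k => k < size w) L ->
  mask (mkseq (fun k => k \in L) (size w)) w = map (nth x0 w) L.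
Proof.
move=> HL Ha.
rewrite -{2}(mkseq_nth x0 w) /mkseq -map_mask; congr map.
rewrite -filter_mask.
apply: (irr_sorted_eq ltn_trans ltnn).
  exact: sorted_filter ltn_trans _ _ (iota_ltn_sorted 0 _).
done.
move=> k; rewrite mem_filter mem_iota /= add0n.
case Hk: (k \in L) => //=.
by move/allP: Ha => /(_ k Hk) ->.
Qed.

Section Emb.
Variable Sigma : finType.

Definition Le (u w : seq Sigma) (e : 'I_(size u) -> 'I_(size w)) : seq nat :=
  [seq val (e i) | i <- enum 'I_(size u)].
Definition me (u w : seq Sigma) (e : 'I_(size u) -> 'I_(size w)) : bitseq :=
  mkseq (fun k => k \in Le e) (size w).

Variables u w : seq Sigma.
Implicit Types e : 'I_(size u) -> 'I_(size w).

Lemma Le_sorted e : is_embedding e -> sorted ltn (Le e).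
Proof.
move=> [Hinc _]; rewrite /Le sorted_map.
have : sorted (relpre val ltn) (enum 'I_(size u)).
  by rewrite -sorted_map val_enum_ord iota_ltn_sorted.
apply: sub_sorted => i j /=; exact: Hinc.
Qed.

Lemma Le_all e : all (fun k => k < size w) (Le e).
Proof. apply/allP => k /mapP [i _ ->]; exact: ltn_ord. Qed.

Lemma Le_mem e k : (k \in Le e) = [exists i, val (e i) == k].
Proof.
apply/mapP/existsP => [[i _ ->]|[i /eqP <-]]; first by exists i.
by exists i; rewrite ?mem_enum.
Qed.

Lemma Le_nth e (i : 'I_(size u)) : nth 0 (Le e) i = e i.
Proof. by rewrite /Le (nth_map i) ?size_enum_ord // nth_ord_enum. Qed.

Lemma size_Le e : size (Le e) = size u.
Proof. by rewrite size_map size_enum_ord. Qed.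

Lemma size_me e : size (me e) = size w.
Proof. by rewrite size_mkseq. Qed.

Lemma mask_me e : is_embedding e -> mask (me e) w = u.
Proof.
move=> He.
have [Hw|[x0 _]] : w = [::] \/ exists x0 : Sigma, True.
  by case: (w) => [|x ?]; [left|right; exists x].
  have -> : mask (me e) w = [::] by move: (me e); rewrite Hw; case.
  case: u e He => [|y u'] e He //.
  by move: (ltn_ord (e ord0)); move: (val (e ord0)) => k; rewrite Hw.
rewrite /me (maskL x0) ?Le_sorted ?Le_all //.
apply: (@eq_from_nth _ x0); first by rewrite size_map size_Le.
move=> i; rewrite size_map size_Le => Hi.
rewrite (nth_map 0) ?size_Le //.
have := Le_nth e (Ordinal Hi); move=> /= ->.
case: He => _ /(_ (Ordinal Hi)).
by rewrite !(tnth_nth x0) /= => <-.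
Qed.

Lemma me_inj e1 e2 : is_embedding e1 -> is_embedding e2 -> me e1 = me e2 -> e1 =1 e2.
Proof.
move=> H1 H2 E.
have EL : Le e1 = Le e2.
  apply: (irr_sorted_eq ltn_trans ltnn); rewrite ?Le_sorted //.
  move=> k.
  case: (ltnP k (size w)) => Hk.
    by have := congr1 (fun s => nth false s k) E; rewrite /me !nth_mkseq.
  apply/idP/idP => /(allP (Le_all _)) /=; by rewrite ltnNge Hk.
move=> i; apply: val_inj; by rewrite /= -(Le_nth e1 i) -(Le_nth e2 i) EL.
Qed.
End Emb.

Section Bridge.
Variable Sigma : finType.

Lemma mask_iota_filter (m : bitseq) n : size m = n ->
  mask m (iota 0 n) = filter (nth false m) (iota 0 n).
Proof. move=> <-; by rewrite filter_mask -/(mkseq _ _) mkseq_nth. Qed.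

Lemma emb_of_mask (u w : seq Sigma) (m : bitseq) : size m = size w -> mask m w = u ->
  exists e : 'I_(size u) -> 'I_(size w), is_embedding e /\
    forall k : 'I_(size w), (exists i, e i = k) <-> nth false m k.
Proof.
move=> Hm <-.
set L := mask m (iota 0 (size w)).
have HL : L = filter (nth false m) (iota 0 (size w)) by exact: mask_iota_filter.
have Hsz : size L = size (mask m w) by rewrite !size_mask ?size_iota.
have HmemL : forall k, (k \in L) = (k < size w) && nth false m k.
  by move=> k; rewrite HL mem_filter mem_iota add0n andbC.
have Hlt : forall i : 'I_(size (mask m w)), nth 0 L i < size w.
  move=> i; have : nth 0 L i \in L by rewrite mem_nth ?Hsz.
  by rewrite HmemL => /andP [].
have Hsorted : sorted ltn L by rewrite HL; exact: sorted_filter ltn_trans _ _ (iota_ltn_sorted 0 _).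
have Hmap : forall x0, mask m w = map (nth x0 w) L.
  by move=> x0; rewrite /L -{1}(mkseq_nth x0 w) /mkseq map_mask.
exists (fun i => Ordinal (Hlt i)); split; first split.
- move=> i j Hij /=.
  apply: (sorted_ltn_nth ltn_trans 0 Hsorted); by rewrite ?inE ?Hsz.
- move=> i; set x0 := tnth_default (in_tuple (mask m w)) i.
  rewrite !(tnth_nth x0) /=.
  have -> : nth x0 (mask m w) i = nth x0 (map (nth x0 w) L) i by rewrite -Hmap.
  by rewrite (nth_map 0) // Hsz.
- move=> k; split.
    move=> [i <-] /=.
    have : nth 0 L i \in L by rewrite mem_nth ?Hsz.
    by rewrite HmemL => /andP [].
  move=> Hk.
  have kL : val k \in L by rewrite HmemL ltn_ord.
  have Hi : index (val k) L < size (mask m w) by rewrite -Hsz index_mem.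
  exists (Ordinal Hi); apply: val_inj => /=; exact: nth_index.
Qed.

Lemma count_negb (m : bitseq) : count id (map negb m) = size m - count id m.
Proof. by rewrite -(count_predC id m) addKn count_map. Qed.

Lemma shuffle_of_mask (u v w : seq Sigma) m : size m = size w -> mask m w = u ->
  mask (map negb m) w = v -> in_shuffle u v w.
Proof.
move=> Hm Hu Hv; split.
  rewrite -Hu -Hv !size_mask ?size_map // count_negb subnKC //.
  exact: count_size.
have [e1 [He1 Im1]] := emb_of_mask Hm Hu.
have Hm' : size (map negb m) = size w by rewrite size_map.
have [e2 [He2 Im2]] := emb_of_mask Hm' Hv.
exists e1, e2; split; first done; split; first done; move=> k.
move: (Im1 k) (Im2 k); rewrite (nth_map false) ?Hm //.
case: (nth false m k) => /= H1 H2.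
  split => [_ [j Hj]|_]; last exact: (proj2 H1).
  by have := (proj1 H2) (ex_intro _ j Hj).
split => [Hi|Hn]; first by have := proj1 H1 Hi.
exfalso; apply: Hn; exact: (proj2 H2).
Qed.

Lemma inC_of_mask (w : seq Sigma) m : size m = size w ->
  in_C w (mask m w) (mask (map negb m) w).
Proof.
move=> Hm; split; last exact: (shuffle_of_mask Hm erefl erefl).
by rewrite !size_mask ?size_map // count_negb Hm.
Qed.

Lemma mask_of_shuffle (u v w : seq Sigma) : in_shuffle u v w ->
  exists m, [/\ size m = size w, mask m w = u & mask (map negb m) w = v].
Proof.
move=> [_ [e1 [e2 [He1 [He2 Hc]]]]].
exists (me e1); split; [exact: size_me | exact: mask_me |].
suff -> : map negb (me e1) = me e2 by exact: mask_me.
apply: (@eq_from_nth _ false); first by rewrite size_map !size_me.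
move=> k; rewrite size_map size_me => Hk.
rewrite (nth_map false) ?size_me // /me !nth_mkseq // !Le_mem.
have := Hc (Ordinal Hk).
case: existsP => [[i /eqP Hi]|Hn]; case: existsP => [[j /eqP Hj]|Hn'] //= [H1 H2].
- exfalso; apply: H1; first by exists i; apply: val_inj.
  by exists j; apply: val_inj.
- exfalso; have [i Hi] : exists i, e1 i = Ordinal Hk.
    apply: H2 => -[j Hj]; apply: Hn'; exists j; by rewrite Hj.
  by apply: Hn; exists i; rewrite Hi.
Qed.

Lemma count_mask_split (p : pred Sigma) (w : seq Sigma) m : size m = size w ->
  count p (mask m w) + count p (mask (map negb m) w) = count p w.
Proof.
elim: w m => [|a w IH] [|x m] //= [Hm].
case: x => /=; rewrite -(IH _ Hm); lia.
Qed.
End Bridge.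

Theorem proposition30 (Sigma : finType) (w : seq Sigma) :
  ~ has_letter_square w <->
  (forall u : seq Sigma, subseq u w -> C_card_one w u -> unique_embedding u w).
Proof.
split.
  move=> Hsq u Hsub [v [Hv Huniq]].
  have [m Hm Hu] := subseqP Hsub.
  split.
    have [e [He _]] := emb_of_mask Hm (esym Hu).
    by exists e.
  move=> e1 e2 He1 He2.
  apply: (me_inj He1 He2).
  apply/eqP/negPn/negP => Hne.
  have [m1 [m2 [H1 H2 H3 H4 H5]]] :=
    core Hsq (size_me e1) (size_me e2) (etrans (mask_me He1) (esym (mask_me He2))) Hne.
  have E1 := inC_of_mask H1; rewrite H3 mask_me // in E1; have {}E1 := Huniq _ E1.
  have E2 := inC_of_mask H2; rewrite H4 mask_me // in E2; have {}E2 := Huniq _ E2.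
  by rewrite E1 E2 eqxx in H5.
move=> H [a /infixP [w1 [w2 Ew]]].
set m := nseq (size w1) true ++ false :: true :: nseq (size w2) true.
set m' := nseq (size w1) true ++ true :: false :: nseq (size w2) true.
set u := w1 ++ a :: w2.
have Hsm : size m = size w by rewrite Ew !size_cat /= !size_nseq.
have Hsm' : size m' = size w by rewrite Ew !size_cat /= !size_nseq.
have Hmu : mask m w = u.
  by rewrite Ew /= mask_cat ?size_nseq // mask_true // /= mask_true ?size_nseq.
have Hmu' : mask m' w = u.
  by rewrite Ew /= mask_cat ?size_nseq // mask_true // /= mask_true ?size_nseq.
have Hsub : subseq u w by rewrite -Hmu mask_subseq.
have HC : C_card_one w u.
  exists [:: a]; split.
    have := inC_of_mask Hsm; rewrite Hmu.
    by rewrite Ew /= map_cat /= !map_nseq mask_cat ?size_nseq // mask_false /= mask_false.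
  move=> v' [Hsz Hsh].
  have [m'' [Hs'' Hu'' Hv'']] := mask_of_shuffle Hsh.
  have : size v' = 1 by rewrite Hsz /u Ew !size_cat /=; lia.
  case: v' Hsz Hsh Hv'' => [|b [|? ?]] //= _ _ Hv'' _.
  have := count_mask_split (pred1 b) Hs''; rewrite Hu'' Hv'' /= eqxx.
  rewrite /u Ew !count_cat /=.
  case: (eqVneq a b) => [->//|Hab].
  move=> /= ?; lia.
have [[e0 _] Hun] := H u Hsub HC.
have [e1 [He1 I1]] := emb_of_mask Hsm Hmu.
have [e2 [He2 I2]] := emb_of_mask Hsm' Hmu'.
have Hk : size w1 < size w by rewrite Ew size_cat /=; lia.
have Hn2 : nth false m' (Ordinal Hk) by rewrite /m' nth_cat size_nseq ltnn subnn.
have [i Hi] := (proj2 (I2 (Ordinal Hk))) Hn2.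
have := (proj1 (I1 (Ordinal Hk))) (ex_intro _ i (etrans (Hun _ _ He1 He2 i) Hi)).
by rewrite /m nth_cat size_nseq ltnn subnn.
Qed.
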